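(* Let $\mathcal{G}=(\mathcal{V},\mathcal{E})$ be an undirected graph with $|\mathcal{N}_i|\ge (d+1)F+1$ for every $i\in\mathcal{V}$, and let $i\in\mathcal{B}$ be a benign agent updating by the resilient multi-dimensional consensus algorithm described in the context. Fix a time $k$, let $p=(k\bmod d)+1$, and let $\underline{m}_p(k)$ and $\overline{M}_p(k)$ be respectively the $(dF+1)$-th smallest and the $(dF+1)$-th largest of the values $e_p^{T}x$, $x\in\mathcal{X}^i(k)$ (counted with multiplicity). Then $y^i_p(k)\le\underline{m}_p(k)$ and $z^i_p(k)\ge\overline{M}_p(k)$.
   Context: $\mathcal{G}=(\mathcal{V},\mathcal{E})$ is undirected, $\mathcal{N}_i=\{j\in\mathcal{V}: e_{ij}\in\mathcal{E}\}$; $\mathcal{B}\subset\mathcal{V}$ is the set of benign agents; the other agents may send arbitrary values. $e_p$ is the $p$-th canonical basis vector of $\mathbb{R}^d$ and $v_p$ denotes the $p$-th entry of a vector $v$. For a finite multiset $\mathcal{A}\subset\mathbb{R}^d$ of cardinality $m$ (counted with multiplicity) and integer $0\le n\le m$, let $\mathcal{S}(\mathcal{A},n)$ be the collection of all sub-multisets of $\mathcal{A}$ of cardinality $m-n$, and $\varPsi(\mathcal{A},n)=\bigcap_{S\in\mathcal{S}(\mathcal{A},n)}\mathrm{Conv}(S)$. Algorithm: each benign agent $i$ has state $x^i(k)\in\mathbb{R}^d$. At each time $k$: (1) $i$ collects in the multiset $\mathcal{X}^i(k)$ the values received from all $j\in\mathcal{N}_i$; (2) with $p=(k \bmod d)+1$,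 it sorts the points of $\mathcal{X}^i(k)$ in ascending order of their $p$-th entries; (3) $\mathcal{Y}^i(k)$ is the multiset of the first $(d+1)F+1$ sorted points, and $y^i(k)$ is any point of $\varPsi(\mathcal{Y}^i(k),F)$; (4) $\mathcal{Z}^i(k)$ is the multiset of the last $(d+1)F+1$ sorted points, and $z^i(k)$ is any point of $\varPsi(\mathcal{Z}^i(k),F)$; (5) $x^i(k+1)=\frac{1}{3}\big(x^i(k)+y^i(k)+z^i(k)\big)$. *)

(* Defs.v *)
From HB Require Import structures.
From mathcomp Require Import all_boot all_order all_algebra.
From mathcomp Require Import reals.
Set Implicit Arguments. Unset Strict Implicit. Unset Printing Implicit Defensive.
Import Order.TTheory GRing.Theory Num.Theory.
Local Open Scope ring_scope.

Section RMC.
Variables (R : realType) (d : nat).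

(* points of R^d are row vectors; the p-th entry of v is  v 0 p  (0-based p) *)
Notation pt := 'rV[R]_d.

Definition conv (S : seq pt) (v : pt) : Prop :=
  exists w : nat -> R,
    (forall j, 0 <= w j) /\
    \sum_(j < size S) w j = 1 /\
    v = \sum_(j < size S) w j *: S`_j.

(* Psi(A,n): intersection of Conv(S) over all sub-multisets S of A of
   cardinality |A| - n; sub-multisets are represented by masks. *)
Definition Psi (A : seq pt) (n : nat) (v : pt) : Prop :=
  forall b : bitseq, size b = size A -> count id b = (size A - n)%N ->
    conv (mask b A) v.

(* 0-based coordinate index p-1 = k mod d used at time k *)
Definition coord_idx (hd : (0 < d)%N) (k : nat) : 'I_d :=
  Ordinal (ltn_pmod k hd).

(* one step (2)-(4) of the algorithm for a benign agent: X is the received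
   multiset, s a sorting of X by the p-th entries, y in Psi(Y,F), z in Psi(Z,F) *)
Definition rmc_step (F : nat) (p : 'I_d) (X s : seq pt) (y z : pt) : Prop :=
  let n := ((d.+1 * F).+1)%N in
  [/\ perm_eq s X,
      sorted (fun a b : pt => a 0 p <= b 0 p) s,
      Psi (take n s) F y &
      Psi (drop (size s - n) s) F z].

(* (r+1)-th smallest value (0-based r) of the p-th entries of X *)
Definition kth_smallest (p : 'I_d) (X : seq pt) (r : nat) : R :=
  nth 0 (sort <=%R [seq (v : pt) 0 p | v <- X]) r.

(* (r+1)-th largest value (0-based r) of the p-th entries of X *)
Definition kth_largest (p : 'I_d) (X : seq pt) (r : nat) : R :=
  nth 0 (sort <=%R [seq (v : pt) 0 p | v <- X]) (size X - r.+1).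

End RMC.

(* X^i(k): values received by i at time k from all neighbours j (adj i j);
   msg k j i is the value sent by j to i at time k *)
Definition received (R : realType) (d : nat) (V : finType) (adj : rel V)
  (msg : nat -> V -> V -> 'rV[R]_d) (k : nat) (i : V) : seq 'rV[R]_d :=
  [seq msg k j i | j <- enum (adj i)].

(* Main.v *)
Require Import Defs.
From HB Require Import structures.
From mathcomp Require Import all_boot all_order all_algebra.
From mathcomp Require Import reals.
From mathcomp Require Import zify.
Import Order.TTheory GRing.Theory Num.Theory.
Local Open Scope ring_scope.

Lemma conv_le (R : realType) (d : nat) (S : seq 'rV[R]_d) (v : 'rV[R]_d) (c : R) (p : 'I_d) :
  conv S v -> (forall j, (j < size S)%N -> S`_j 0 p <= c) -> v 0 p <= c.
Proof.
move=> [w [w0 [w1 ->]]] H.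
rewrite summxE.
apply: (@le_trans _ _ (\sum_(j < size S) w j * c)).
  apply: ler_sum => j _; rewrite mxE; apply: ler_wpM2l => //; exact: H.
by rewrite -mulr_suml w1 mul1r.
Qed.

Lemma conv_ge (R : realType) (d : nat) (S : seq 'rV[R]_d) (v : 'rV[R]_d) (c : R) (p : 'I_d) :
  conv S v -> (forall j, (j < size S)%N -> c <= S`_j 0 p) -> c <= v 0 p.
Proof.
move=> [w [w0 [w1 ->]]] H.
rewrite summxE.
apply: (@le_trans _ _ (\sum_(j < size S) w j * c)).
  by rewrite -mulr_suml w1 mul1r.
apply: ler_sum => j _; rewrite mxE; apply: ler_wpM2l => //; exact: H.
Qed.

Lemma mask_take (T : Type) (a b : nat) (A : seq T) :
  size A = (a + b)%N -> mask (nseq a true ++ nseq b false) A = take a A.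
Proof.
move=> hs; rewrite -{1}[A](cat_take_drop a) mask_cat; last by rewrite size_nseq size_take hs; case: ltnP => //; lia.
rewrite mask_false cats0 mask_true //.
by rewrite size_take; case: ltnP => //; lia.
Qed.

Lemma mask_drop (T : Type) (a b : nat) (A : seq T) :
  size A = (b + a)%N -> mask (nseq b false ++ nseq a true) A = drop b A.
Proof.
move=> hs; rewrite -{1}[A](cat_take_drop b) mask_cat; last by rewrite size_nseq size_take hs; case: ltnP => //; lia.
rewrite mask_false cat0s mask_true //.
rewrite size_drop hs; lia.
Qed.

Theorem corollary2 (R : realType) (V : finType) (adj : rel V)
  (adj_sym : symmetric adj) (B : {set V}) (d F : nat) (hd : (0 < d)%N)
  (hN : forall i : V, ((d.+1 * F).+1 <= #|[set j | adj i j]|)%N)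
  (x : nat -> V -> 'rV[R]_d) (msg : nat -> V -> V -> 'rV[R]_d)
  (hmsg : forall (k : nat) (j i : V), j \in B -> msg k j i = x k j)
  (s : nat -> V -> seq 'rV[R]_d) (y z : nat -> V -> 'rV[R]_d)
  (halg : forall (k : nat) (i : V), i \in B ->
     rmc_step F (coord_idx hd k) (received adj msg k i) (s k i) (y k i) (z k i)
     /\ x k.+1 i = 3%:R^-1 *: (x k i + y k i + z k i))
  (i : V) (hi : i \in B) (k : nat) :
  y k i 0 (coord_idx hd k)
    <= kth_smallest (coord_idx hd k) (received adj msg k i) (d * F)
  /\ kth_largest (coord_idx hd k) (received adj msg k i) (d * F)
    <= z k i 0 (coord_idx hd k).
Proof.
have [[hperm hsort hY hZ] _] := halg k i hi.
set p := coord_idx hd k in hperm hsort hY hZ *.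
set X := received adj msg k i in hperm hsort hY hZ *.
set S := s k i in hperm hsort hY hZ *.
set t := [seq (v : 'rV[R]_d) 0 p | v <- S].
have hsX : size X = #|[set j | adj i j]|.
  by rewrite /X /received size_map -cardE cardsE.
have hNX := hN i; rewrite -hsX in hNX.
have hSX : size S = size X by apply: perm_size.
have ht : sorted <=%R t by rewrite sorted_map.
have hsortX : sort <=%R [seq (v : 'rV[R]_d) 0 p | v <- X] = t.
  rewrite -(sorted_sort le_trans ht); apply/perm_sortP.
  - exact: le_total.
  - exact: le_trans.
  - exact: le_anti.
  by rewrite perm_sym; apply: perm_map.
have hst : size t = size S by rewrite size_map.
have tle : forall a b, (a <= b)%N -> (b < size S)%N -> t`_a <= t`_b.
  move=> a b hab hb; apply: (sorted_leq_nth le_trans (@lexx _ _) 0 ht) => //;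
    rewrite inE hst //; lia.
have hnth : forall j, (j < size S)%N -> S`_j 0 p = t`_j.
  by move=> j hj; rewrite (nth_map 0).
split.
- rewrite /kth_smallest hsortX.
  pose b := nseq (d * F).+1 true ++ nseq F false.
  have := hY b.
  rewrite size_take hSX.
  have -> : (if ((d.+1 * F).+1 < size X)%N then (d.+1 * F).+1 else size X) = (d.+1 * F).+1.
    by case: ltnP => //; lia.
  rewrite /b size_cat !size_nseq count_cat !count_nseq /= mul1n mul0n addn0.
  have e1 : ((d * F).+1 + F = (d.+1 * F).+1)%N by rewrite mulSn; lia.
  have e2 : ((d.+1 * F).+1 - F = (d * F).+1)%N by rewrite mulSn; lia.
  rewrite e1 e2 => /(_ erefl erefl).
  rewrite (@mask_take _ (d * F).+1 F); last by rewrite size_take hSX; case: ltnP => //; lia.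
  rewrite take_takel; last by lia.
  move=> hc; apply: (@conv_le _ _ _ _ _ p hc) => j.
  rewrite size_take_min hSX => hj.
  have hj' : (j < (d * F).+1)%N by lia.
  rewrite nth_take // hnth; last by lia.
  apply: tle; lia.
- rewrite /kth_largest hsortX.
  pose b := nseq F false ++ nseq (d * F).+1 true.
  have := hZ b.
  rewrite size_drop hSX.
  have e0 : (size X - (size X - (d.+1 * F).+1) = (d.+1 * F).+1)%N by lia.
  rewrite e0.
  rewrite /b size_cat !size_nseq count_cat !count_nseq /= mul1n mul0n add0n.
  have e1 : (F + (d * F).+1 = (d.+1 * F).+1)%N by rewrite mulSn; lia.
  have e2 : ((d.+1 * F).+1 - F = (d * F).+1)%N by rewrite mulSn; lia.
  rewrite e1 e2 => /(_ erefl erefl).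
  rewrite (@mask_drop _ (d * F).+1 F); last by rewrite size_drop hSX; lia.
  rewrite drop_drop.
  move=> hc; apply: (@conv_ge _ _ _ _ _ p hc) => j.
  rewrite size_drop hSX => hj.
  rewrite nth_drop hnth; last by rewrite hSX; lia.
  apply: tle; rewrite ?hSX; rewrite mulSn in hj hNX *; lia.
Qed.
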